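(* Let $n\ge2$, $\alpha,\beta>0$, $a=1/\alpha$, $b=1/\beta$, and let $1\le j_1<\dots<j_r\le n-1$. For $1\le j\le n-1$ let $x_j$ be the event that box $(n-j,j)$ (on the second main diagonal) is non-empty. If $j_k\le j_{k+1}-2$ for all $k=1,\dots,r-1$, then \[\mathbb{P}_{n,\alpha,\beta}(x_{j_1},\dots,x_{j_r})=\prod_{k=1}^{r}\frac{1}{n+a+b-r+k-1}.\] Otherwise, $\mathbb{P}_{n,\alpha,\beta}(x_{j_1},\dots,x_{j_r})=0$.
   Context: A staircase tableau of size $n$ has boxes $(i,j)$ with $i,j\ge1$ and $i+j\le n+1$, rows numbered from the top and columns from the left. An $\alpha/\beta$-staircase tableau of size $n$ is a filling in which each box is empty or contains $\alpha$ or $\beta$, such that: all boxes in the same column and above an $\alpha$ are empty; all boxes in the same row and to the left of a $\beta$ are empty; every main-diagonal box (with $i+j=n+1$) contains a symbol. $\overline{\mathcal{S}}_n$ is the set of these. The weight is $wt(S)=\alpha^{N_\alpha}\beta^{N_\beta}$ ($N_\alpha,N_\beta$ the numbers of $\alpha$'s, $\beta$'s), and $\mathbb{P}_{n,\alpha,\beta}(S)=wt(S)/\sum_{T\in\overline{\mathcal{S}}_n}wt(T)$. $\mathbb{P}_{n,\alpha,\beta}(E_1,\dots,E_r)$ denotes the probability of the intersection of the events. *)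

(* Defs.v *)
From mathcomp Require Import all_boot all_order all_algebra.
Set Implicit Arguments. Unset Strict Implicit. Unset Printing Implicit Defensive.
Import Order.TTheory GRing.Theory Num.Theory.

(* Boxes are indexed 0-based: p = (i', j') : 'I_n * 'I_n stands for the box
   (i'+1, j'+1) (row, column).  A box of the staircase of size n satisfies
   (i'+1)+(j'+1) <= n+1, i.e. i'+j' < n; the main diagonal is i'+j' = n-1. *)
Definition box n := ('I_n * 'I_n)%type.

(* Cell content: None = empty, Some true = alpha, Some false = beta. *)
Definition filling n := {ffun box n -> option bool}.

Definition in_stair n (p : box n) : bool := (p.1 + p.2 < n)%N.

Definition is_ab_stair n (S : filling n) : bool :=
  [&& [forall p : box n, ~~ in_stair p ==> (S p == None)],
      [forall p : box n, (S p == Some true) ==>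
          [forall q : box n, ((q.2 == p.2) && (q.1 < p.1)%N) ==> (S q == None)]],
      [forall p : box n, (S p == Some false) ==>
          [forall q : box n, ((q.1 == p.1) && (q.2 < p.2)%N) ==> (S q == None)]]
    &
      [forall p : box n, (p.1 + p.2 == n.-1)%N ==> (S p != None)]].

Definition stairs n : {set filling n} := [set S | is_ab_stair S].

Definition N_alpha n (S : filling n) : nat := #|[set p | S p == Some true]|.
Definition N_beta n (S : filling n) : nat := #|[set p | S p == Some false]|.

Local Open Scope ring_scope.

Definition wt (R : realFieldType) (alpha beta : R) n (S : filling n) : R :=
  alpha ^+ N_alpha S * beta ^+ N_beta S.

Definition prob (R : realFieldType) n (alpha beta : R) (E : pred (filling n)) : R :=
  (\sum_(S in stairs n | E S) wt alpha beta S) /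
  (\sum_(S in stairs n) wt alpha beta S).

(* x_j : box (n-j, j) (1-based) is non-empty, i.e. 0-based (n-j-1, j-1). *)
Definition x_ev n (j : nat) : pred (filling n) := fun S =>
  [exists p : box n,
     [&& (p.1 == n - j - 1 :> nat)%N, (p.2 == j - 1 :> nat)%N & S p != None]].

Definition x_evs n (js : seq nat) : pred (filling n) := fun S =>
  all (fun j => x_ev j S) js.

(* Main.v *)
Require Import Defs.
From mathcomp Require Import all_boot all_order all_algebra zify ring lra.
Set Implicit Arguments. Unset Strict Implicit. Unset Printing Implicit Defensive.
Import Order.TTheory GRing.Theory Num.Theory.
Local Open Scope ring_scope.

Lemma sumopt (R : nmodType) (F : option bool -> R) : \sum_(a : option bool) F a = F None + F (Some true) + F (Some false).
Proof.
rewrite (bigD1 None) // (bigD1 (Some true)) // (bigD1 (Some false)) // big_pred0; last by case=> [[]|].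
transitivity (F None + (F (Some true) + (F (Some false) + 0))); first by [].
by rewrite addr0 addrA.
Qed.

Section Main.
Variable R : realFieldType.
Variables alpha beta : R.
Variable n : nat.
Local Notation fill := (filling n).
Local Notation rowT := {ffun 'I_n -> option bool}.

Definition acond (S : fill) := [forall p : box n, (S p == Some true) ==> [forall q : box n, ((q.2 == p.2) && (q.1 < p.1)%N) ==> (S q == None)]].
Definition bcond (S : fill) := [forall p : box n, (S p == Some false) ==> [forall q : box n, ((q.1 == p.1) && (q.2 < p.2)%N) ==> (S q == None)]].
Definition good (k : nat) (S : fill) : bool :=
  [&& [forall p : box n, (S p != None) ==> ((p.1 + p.2 < n)%N && (k <= p.1)%N)], acond S, bcond S &
      [forall p : box n, ((p.1 + p.2 == n.-1)%N && (k <= p.1)%N) ==> (S p != None)]].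

Lemma goodP k (S : fill) : reflect
 [/\ (forall p : box n, S p != None -> (p.1 + p.2 < n)%N /\ (k <= p.1)%N),
     (forall p q : box n, S p = Some true -> q.2 = p.2 -> (q.1 < p.1)%N -> S q = None),
     (forall p q : box n, S p = Some false -> q.1 = p.1 -> (q.2 < p.2)%N -> S q = None) &
     (forall p : box n, (p.1 + p.2)%N = n.-1 -> (k <= p.1)%N -> S p != None)] (good k S).
Proof.
apply: (iffP and4P) => [[/forallP h1 /forallP h2 /forallP h3 /forallP h4]|[h1 h2 h3 h4]]; split.
- by move=> p hp; have /andP[a b] := implyP (h1 p) hp.
- move=> p q hp hq hlt; have /forallP h := implyP (h2 p) (introT eqP hp).
  by apply/eqP/(implyP (h q)); rewrite hq eqxx hlt.
- move=> p q hp hq hlt; have /forallP h := implyP (h3 p) (introT eqP hp).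
  by apply/eqP/(implyP (h q)); rewrite hq eqxx hlt.
- by move=> p hp hk; apply: (implyP (h4 p)); rewrite hp eqxx hk.
- by apply/forallP => p; apply/implyP => hp; have [a b] := h1 p hp; rewrite a b.
- apply/forallP => p; apply/implyP => /eqP hp; apply/forallP => q; apply/implyP => /andP[/eqP hq hlt].
  by rewrite (h2 p q).
- apply/forallP => p; apply/implyP => /eqP hp; apply/forallP => q; apply/implyP => /andP[/eqP hq hlt].
  by rewrite (h3 p q).
- by apply/forallP => p; apply/implyP => /andP[/eqP hp hk]; apply: h4.
Qed.

Definition clr (i : 'I_n) (S : fill) : fill := [ffun p : box n => if p.1 == i then None else S p].
Definition glue (i : 'I_n) (S : fill) (v : rowT) : fill := [ffun p : box n => if p.1 == i then v p.2 else S p].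
Definition rowv (i : 'I_n) (S : fill) : rowT := [ffun c => S (i, c)].

Lemma good_clr (i : 'I_n) (S : fill) : good i S -> good i.+1 (clr i S).
Proof.
move=> /goodP[h1 h2 h3 h4]; apply/goodP; split.
- move=> p; rewrite ffunE; case: ifP => // /negbT hne hp; have [a b] := h1 p hp; split => //.
  by rewrite ltn_neqAle b andbT; apply: contra hne => /eqP he; apply/eqP/val_inj.
- move=> p q; rewrite !ffunE; case: ifP => // _ hp hq hlt; case: ifP => // _; exact: h2 hp hq hlt.
- move=> p q; rewrite !ffunE; case: ifP => // _ hp hq hlt; case: ifP => // _; exact: h3 hp hq hlt.
- move=> p hd hk; rewrite ffunE; case: ifP => [/eqP he|_]; last by apply: h4 => //; exact: ltnW.
  by move: hk; rewrite he ltnn.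
Qed.

Lemma supp_none k (S : fill) (p : box n) : good k S -> (p.1 < k)%N -> S p = None.
Proof.
move=> /goodP[h1 _ _ _] hlt; apply/eqP; apply/negPn/negP => /h1 [_ hk].
by move: (leq_ltn_trans hk hlt); rewrite ltnn.
Qed.

Lemma decomp (i : 'I_n) (Fn : fill -> R) :
  \sum_(S | good i S) Fn S = \sum_(S' | good i.+1 S') \sum_(v | good i (glue i S' v)) Fn (glue i S' v).
Proof.
rewrite (partition_big (clr i) (good i.+1)) /=; last exact: good_clr.
apply: eq_bigr => S' gS'.
rewrite (reindex_onto (glue i S') (rowv i)) /=; last first.
  move=> S /andP[_ /eqP <-]; apply/ffunP => -[a b]; rewrite !ffunE /=.
  by case: (a =P i) => [->|_]; rewrite ?eqxx.
apply: eq_bigl => v.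
have -> : clr i (glue i S' v) = S'.
  apply/ffunP => p; rewrite !ffunE; case: (p.1 =P i) => [he|//].
  by rewrite (supp_none (k := i.+1)) // he.
have -> : rowv i (glue i S' v) = v by apply/ffunP => c; rewrite !ffunE eqxx.
by rewrite !eqxx !andbT.
Qed.


Definition colfree (S : fill) (c : 'I_n) := [forall i : 'I_n, S (i, c) != Some true].
Definition fr (k : nat) (S : fill) := [set c : 'I_n | (k + c < n)%N && colfree S c].
Definition rowok (Fr : {set 'I_n}) (d : 'I_n) (v : rowT) :=
  [&& [forall c : 'I_n, (v c != None) ==> (c \in Fr)],
      [forall c : 'I_n, forall c' : 'I_n, ((v c' == Some false) && (c < c')%N) ==> (v c == None)] & v d != None].

Lemma glue_in (i : 'I_n) S v c : glue i S v (i, c) = v c.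
Proof. by rewrite ffunE /= eqxx. Qed.
Lemma glue_out (i : 'I_n) S v (p : box n) : p.1 != i -> glue i S v p = S p.
Proof. by rewrite ffunE => /negbTE ->. Qed.

Lemma good_glue (i : 'I_n) (S' : fill) v : good i.+1 S' ->
  good i (glue i S' v) = rowok (fr i S') (rev_ord i) v.
Proof.
move=> gS'; have /goodP[g1 g2 g3 g4] := gS'.
apply/idP/idP.
- move/goodP => [h1 h2 h3 h4]; apply/and3P; split.
  + apply/forallP => c; apply/implyP => hc; rewrite inE.
    have /h1[hn _] : glue i S' v (i, c) != None by rewrite glue_in.
    rewrite hn /=; apply/forallP => i'; apply/negP => /eqP ha.
    have /g1[_ hk] : S' (i', c) != None by rewrite ha.
    have hne : i' != i by rewrite neq_ltn /= hk orbT.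
    have := h2 (i', c) (i, c); rewrite glue_in glue_out // => /(_ ha erefl hk) hv.
    by rewrite hv in hc.
  + apply/forallP => c; apply/forallP => c'; apply/implyP => /andP[/eqP hb hlt].
    by have := h3 (i, c') (i, c); rewrite !glue_in => /(_ hb erefl hlt) ->.
  + have := h4 (i, rev_ord i); rewrite glue_in; apply => //=.
    by have := ltn_ord i; lia.
- move/and3P => [/forallP r1 /forallP r2 r3]; apply/goodP; split.
  + move=> [a b] /=; case: (a =P i) => [->|/eqP hne].
      rewrite glue_in => /(implyP (r1 b)); rewrite inE => /andP[h _]; by split.
    rewrite glue_out //= => /(g1 (a, b)) /= [h1 h2]; split => //; exact: ltnW.
  + move=> [a b] [a' b'] /=; case: (a =P i) => [->|/eqP hne].
      move=> _ -> hlt; rewrite glue_out /=; last by rewrite neq_ltn hlt.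
      by rewrite (supp_none (k := i.+1)) //= (ltn_trans hlt).
    rewrite glue_out // => ha -> hlt; case: (a' =P i) => [->|/eqP hne'].
      rewrite glue_in; apply/eqP; apply/negPn/negP => /(implyP (r1 b)).
      by rewrite inE => /andP[_ /forallP /(_ a)]; rewrite ha.
    by rewrite glue_out //; apply: (g2 (a, b)).
  + move=> [a b] [a' b'] /=; case: (a =P i) => [->|/eqP hne].
      rewrite glue_in => hb -> hlt; rewrite glue_in; apply/eqP.
      by apply: (implyP (forallP (r2 b') b)); rewrite hb eqxx hlt.
    rewrite glue_out // => hb he hlt; rewrite glue_out /= he //.
    by apply: (g3 (a, b)) => //=; rewrite he.
  + move=> [a b] /= hd hk; case: (a =P i) => [ha|/eqP hne].
      subst a; rewrite glue_in; suff -> : b = rev_ord i by [].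
      by apply/val_inj => /=; move: hd (ltn_ord i); lia.
    rewrite glue_out //; apply: (g4 (a, b)) => //=.
    by rewrite ltn_neqAle hk andbT eq_sym.
Qed.

Definition upd (v : rowT) (c : 'I_n) (a : option bool) : rowT := [ffun c' => if c' == c then a else v c'].

Lemma split_at (c : 'I_n) (P : pred rowT) (Fn : rowT -> R) :
  \sum_(v : rowT | P v) Fn v = \sum_(a : option bool) \sum_(v : rowT | (v c == None) && P (upd v c a)) Fn (upd v c a).
Proof.
rewrite (partition_big (fun v : rowT => v c) xpredT) //; apply: eq_bigr => a _.
rewrite (reindex_onto (fun v => upd v c a) (fun v => upd v c None)); last first.
  move=> v /andP[_ /eqP <-]; apply/ffunP => c'; rewrite !ffunE.
  by case: (c' =P c) => [->|].
apply: eq_bigl => v; rewrite ffunE eqxx eqxx andbT andbC; congr andb.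
apply/eqP/eqP => [<-|h]; first by rewrite ffunE eqxx.
apply/ffunP => c'; rewrite !ffunE; case: (c' =P c) => [->|] //.
Qed.

Definition rowokt (Fr : {set 'I_n}) (d : 'I_n) (t : nat) (v : rowT) :=
  [&& [forall c : 'I_n, (v c != None) ==> (c \in Fr) && (t <= c)%N],
      [forall c : 'I_n, forall c' : 'I_n, ((v c' == Some false) && (c < c')%N) ==> (v c == None)] &
      (t <= d)%N ==> (v d != None)].

Lemma rowoktP (Fr : {set 'I_n}) (d : 'I_n) t (v : rowT) : reflect
  [/\ (forall c : 'I_n, v c != None -> c \in Fr /\ (t <= c)%N),
      (forall c c' : 'I_n, v c' = Some false -> (c < c')%N -> v c = None) &
      ((t <= d)%N -> v d != None)] (rowokt Fr d t v).
Proof.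
apply: (iffP and3P) => [[/forallP h1 /forallP h2 /implyP h3]|[h1 h2 h3]]; split => //.
- by move=> c /(implyP (h1 c)) /andP.
- move=> c c' hb hlt; apply/eqP; apply: (implyP (forallP (h2 c) c')).
  by rewrite hb eqxx hlt.
- by apply/forallP => c; apply/implyP => /h1 [-> ->].
- apply/forallP => c; apply/forallP => c'; apply/implyP => /andP[/eqP hb hlt].
  by rewrite (h2 c c').
- exact/implyP.
Qed.

Definition nob (v : rowT) := [forall c, v c != Some false].

Lemma nob_upd (v : rowT) c a : v c = None -> nob (upd v c a) = (a != Some false) && nob v.
Proof.
move=> hc; apply/forallP/andP => [h|[ha /forallP h] c'].
  split; first by have := h c; rewrite ffunE eqxx.
  apply/forallP => c'; have := h c'; rewrite ffunE; case: (c' =P c) => [->|] //.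
  by rewrite hc.
by rewrite ffunE; case: (c' =P c).
Qed.

Lemma rowokt_upd (Fr : {set 'I_n}) (d : 'I_n) t (c : 'I_n) (v : rowT) a : (c : nat) = t ->
  (v c == None) && rowokt Fr d t (upd v c a) =
  if a is Some _ then [&& c \in Fr, rowokt Fr d t.+1 v & nob v]
  else rowokt Fr d t.+1 v && (c != d).
Proof.
move=> ct; have updc : upd v c a c = a by rewrite ffunE eqxx.
have updo c' : c' != c -> upd v c a c' = v c' by rewrite ffunE => /negbTE ->.
have neqv (c' : 'I_n) : c' != c -> (c' : nat) != t.
  by move=> h; rewrite -ct; apply: contra h => /eqP/val_inj ->.
case: a updc updo => [b|] updc updo.
- apply/andP/and3P => [[/eqP vc /rowoktP[h1 h2 h3]]|[cF /rowoktP[h1 h2 h3] /forallP nb]].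
  + have [cFr _] : c \in Fr /\ (t <= c)%N by apply: h1; rewrite updc.
    split => //.
    * apply/rowoktP; split.
      - move=> c' hc'; have hne : c' != c by apply: contraNneq hc' => ->; rewrite vc.
        have := h1 c'; rewrite updo // => /(_ hc') [hF hle]; split => //.
        by have := neqv _ hne; lia.
      - move=> c0 c' hb hlt; case: (c0 =P c) => [->|/eqP hne] //.
        have hne' : c' != c by apply/eqP => e; move: hb; rewrite e vc.
        by have := h2 c0 c'; rewrite !updo // => /(_ hb hlt).
      - move=> hd; have hne : d != c by apply: contraTneq hd => ->; rewrite ct ltnn.
        by rewrite -updo //; apply: h3; exact: ltnW.
    * apply/forallP => c'; apply/negP => /eqP hb.
      have hne' : c' != c by apply/eqP => e; move: hb; rewrite e vc.
      have := h1 c'; rewrite updo // hb => /(_ isT) [_ hle].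
      have hlt : (c < c')%N by have := neqv _ hne'; lia.
      by have := h2 c c'; rewrite updo // updc => /(_ hb hlt).
  + have vc : v c = None.
      by apply/eqP; apply/negPn/negP => /h1 [_]; rewrite ct ltnn.
    split; first by rewrite vc.
    apply/rowoktP; split.
    * move=> c'; case: (c' =P c) => [->|/eqP hne]; first by rewrite ct.
      by rewrite updo // => /h1 [-> /ltnW].
    * move=> c0 c'; case: (c' =P c) => [->|/eqP hne]; last first.
        by rewrite updo // => hb; have := nb c'; rewrite hb eqxx.
      rewrite updc => _ hlt; have hne0 : c0 != c by rewrite neq_ltn hlt.
      rewrite updo //; apply/eqP; apply/negPn/negP => /h1 [_].
      by move=> hle; move: hlt; rewrite ct; lia.
    * move=> hd; case: (d =P c) => [->|/eqP hne]; first by rewrite updc.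
      by rewrite updo //; apply: h3; have := neqv _ hne; lia.
- apply/andP/andP => [[/eqP vc /rowoktP[h1 h2 h3]]|[/rowoktP[h1 h2 h3] hne]].
  + have hne : c != d.
      by apply/eqP => hcd; have := h3; rewrite -hcd ct leqnn updc => /(_ isT).
    split => //; apply/rowoktP; split.
    * move=> c' hc'; have hne' : c' != c by apply: contraNneq hc' => ->; rewrite vc.
      have := h1 c'; rewrite updo // => /(_ hc') [hF hle]; split => //.
      by have := neqv _ hne'; lia.
    * move=> c0 c' hb hlt; case: (c0 =P c) => [->|/eqP hne0] //.
      have hne' : c' != c by apply/eqP => e; move: hb; rewrite e vc.
      by have := h2 c0 c'; rewrite !updo // => /(_ hb hlt).
    * move=> hd; have hne' : d != c by rewrite eq_sym.
      by rewrite -updo //; apply: h3; exact: ltnW.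
  + have vc : v c = None.
      by apply/eqP; apply/negPn/negP => /h1 [_]; rewrite ct ltnn.
    split; first by rewrite vc.
    apply/rowoktP; split.
    * move=> c'; case: (c' =P c) => [->|/eqP hne']; first by rewrite updc.
      by rewrite updo // => /h1 [-> /ltnW].
    * move=> c0 c'; case: (c' =P c) => [->|/eqP hne']; first by rewrite updc.
      rewrite updo // => hb hlt; case: (c0 =P c) => [->|/eqP hne0]; first by rewrite updc.
      by rewrite updo //; apply: h2 hb hlt.
    * move=> hd; have hne' : d != c by rewrite eq_sym.
      by rewrite updo //; apply: h3; have := neqv _ hne'; lia.
Qed.

Definition cntA (v : rowT) := #|[set c | v c == Some true]|.
Definition cntB (v : rowT) := #|[set c | v c == Some false]|.
Definition cntX (Fr : {set 'I_n}) t (v : rowT) := #|[set c | (c \in Fr) && (t <= c)%N && (v c != Some true)]|.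
Definition rwt (Fr : {set 'I_n}) (x : R) t (v : rowT) := alpha ^+ cntA v * beta ^+ cntB v * x ^+ cntX Fr t v.

Lemma card_upd (v : rowT) c a (Q : pred (option bool)) : v c = None -> ~~ Q None ->
  #|[set c' | Q (upd v c a c')]| = (Q a + #|[set c' | Q (v c')]|)%N.
Proof.
move=> hc hQ; rewrite [LHS](cardsD1 c) [X in _ = _ + X](cardsD1 c) !inE ffunE eqxx hc (negbTE hQ) add0n.
congr addn; apply: eq_card => c'; rewrite !inE ffunE.
by case: (c' =P c) => [->|/eqP ne]; rewrite ?eqxx.
Qed.

Lemma cntX_upd (Fr : {set 'I_n}) t (c : 'I_n) (v : rowT) a : (c : nat) = t ->
  cntX Fr t (upd v c a) = (((c \in Fr) && (a != Some true)) + cntX Fr t.+1 v)%N.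
Proof.
move=> ct; rewrite /cntX [LHS](cardsD1 c) !inE ffunE eqxx ct leqnn andbT.
congr addn; apply: eq_card => c'; rewrite !inE ffunE.
case: (c' =P c) => [->|/eqP ne]; first by rewrite ct ltnn !andbF.
have h : (c' : nat) != t by rewrite -ct; apply: contra ne => /eqP/val_inj ->.
by rewrite /= (_ : (t <= c')%N = (t < c')%N) // ltn_neqAle eq_sym h.
Qed.

Definition wfac (Fr : {set 'I_n}) (x : R) (c : 'I_n) (a : option bool) : R :=
  match a with None => if c \in Fr then x else 1 | Some true => alpha
  | Some false => beta * (if c \in Fr then x else 1) end.

Lemma rwt_upd (Fr : {set 'I_n}) x t (c : 'I_n) (v : rowT) a : (c : nat) = t -> v c = None ->
  rwt Fr x t (upd v c a) = wfac Fr x c a * rwt Fr x t.+1 v.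
Proof.
move=> ct vc; rewrite /rwt /cntA /cntB.
rewrite (card_upd a (Q := fun o => o == Some true)) // (card_upd a (Q := fun o => o == Some false)) //.
rewrite cntX_upd //; case: a => [[]|] /=; case: (c \in Fr) => /=;
  rewrite ?add0n ?exprD ?expr1 ?expr0; ring.
Qed.

Definition Tt (Fr : {set 'I_n}) (d : 'I_n) (x : R) t (bf : bool) := \sum_(v : rowT | rowokt Fr d t v && (bf || nob v)) rwt Fr x t v.

Lemma rowokt_none (Fr : {set 'I_n}) (d : 'I_n) t (c : 'I_n) (v : rowT) : (c : nat) = t -> rowokt Fr d t.+1 v -> v c = None.
Proof.
move=> ct /rowoktP[h1 _ _]; apply/eqP; apply/negPn/negP => /h1 [_].
by rewrite ct ltnn.
Qed.

Lemma Tt_part (Fr : {set 'I_n}) (d : 'I_n) x t (c : 'I_n) bf a : (c : nat) = t ->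
  \sum_(v : rowT | (v c == None) && (rowokt Fr d t (upd v c a) && (bf || nob (upd v c a)))) rwt Fr x t (upd v c a)
  = wfac Fr x c a * \sum_(v : rowT | (if a is Some _ then [&& c \in Fr, rowokt Fr d t.+1 v & nob v]
         else rowokt Fr d t.+1 v && (c != d)) && (bf || ((a != Some false) && nob v))) rwt Fr x t.+1 v.
Proof.
move=> ct; rewrite big_distrr /=; apply: eq_big => v.
- rewrite andbA rowokt_upd //.
  case h: (if a is Some _ then _ else _) => //=.
  have vc : v c = None.
    by move: h; case: a => [b|] /= h; [case/and3P: h => _ /(rowokt_none ct) | case/andP: h => /(rowokt_none ct)].
  by rewrite nob_upd.
- by move=> /andP[/eqP vc _]; rewrite rwt_upd.
Qed.

Lemma Tt_step (Fr : {set 'I_n}) (d : 'I_n) x t (c : 'I_n) bf : (c : nat) = t ->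
  Tt Fr d x t bf = (if c != d then (if c \in Fr then x else 1) * Tt Fr d x t.+1 bf else 0)
   + (if c \in Fr then (alpha + (if bf then beta * x else 0)) * Tt Fr d x t.+1 false else 0).
Proof.
move=> ct; rewrite /Tt (split_at c) sumopt !Tt_part //= -addrA; congr (_ + _).
  case: (c != d); last by rewrite big_pred0 ?mulr0 // => v; rewrite andbF.
  by congr (_ * _); apply: eq_bigl => v; rewrite andbT.
case cF: (c \in Fr); last by rewrite !big_pred0 ?mulr0 ?addr0 // => v; rewrite andbF.
rewrite mulrDl; congr (_ + _).
  by congr (_ * _); apply: eq_bigl => v; case: (rowokt _ _ _ _); case: (nob v); case: bf.
case: bf; last by rewrite mul0r big_pred0 ?mulr0 // => v; rewrite !andbF.
by congr (_ * _); apply: eq_bigl => v; case: (rowokt _ _ _ _); case: (nob v).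
Qed.

Definition mcnt (Fr : {set 'I_n}) t := #|[set c in Fr | (t <= c)%N]|.

Lemma mcnt_step (Fr : {set 'I_n}) t (c : 'I_n) : (c : nat) = t -> mcnt Fr t = ((c \in Fr) + mcnt Fr t.+1)%N.
Proof.
move=> ct; rewrite /mcnt (cardsD1 c) !inE ct leqnn andbT; congr addn.
apply: eq_card => c'; rewrite !inE; case: (c' =P c) => [->|/eqP ne]; first by rewrite ct ltnn andbF.
have h : (c' : nat) != t by rewrite -ct; apply: contra ne => /eqP/val_inj ->.
by rewrite /= (_ : (t <= c')%N = (t < c')%N) // ltn_neqAle eq_sym h.
Qed.

Lemma Tt_val (Fr : {set 'I_n}) (d : 'I_n) x : d \in Fr -> (forall c, c \in Fr -> (c <= d)%N) ->
  forall s t, (t + s)%N = n ->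
  if (d < t)%N then Tt Fr d x t true = 1 /\ Tt Fr d x t false = 1
  else Tt Fr d x t true = (alpha + beta * x) * (alpha + x) ^+ (mcnt Fr t).-1 /\
       Tt Fr d x t false = alpha * (alpha + x) ^+ (mcnt Fr t).-1.
Proof.
move=> dF hFd; elim=> [|s IH] t.
  rewrite addn0 => ->; rewrite ltn_ord.
  suff h bf : Tt Fr d x n bf = 1 by rewrite !h.
  rewrite /Tt (big_pred1 [ffun => None]); last first.
    move=> v; apply/idP/eqP => [/andP[/rowoktP[h1 _ _] _]|->].
      apply/ffunP => c; rewrite ffunE; apply/eqP; apply/negPn/negP => /h1 [_].
      by rewrite leqNgt ltn_ord.
    rewrite orbC; apply/andP; split; last by apply/orP; left; apply/forallP => c; rewrite ffunE.
    by apply/rowoktP; split => [c|c c'|]; rewrite ?ffunE // leqNgt ltn_ord.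
  rewrite /rwt /cntA /cntB /cntX !eq_card0 ?expr0 ?mulr1 // => c; rewrite !inE ffunE //.
  by rewrite leqNgt ltn_ord andbF.
move=> hts; have ht : (t < n)%N by rewrite -hts addnS ltnS leq_addr.
have := IH t.+1; rewrite addSnnS => /(_ hts) IH1.
pose c := Ordinal ht; have ct : (c : nat) = t by []. clearbody c.
rewrite !(Tt_step _ _ _ _ ct) (mcnt_step _ ct).
case: (ltngtP d t) => hdt.
- have cF : c \in Fr = false by apply/negP => /hFd; rewrite ct leqNgt hdt.
  have cd : c != d by apply/eqP => e; move: hdt; rewrite -e ct ltnn.
  rewrite ltnS ltnW // in IH1; case: IH1 => -> ->.
  by rewrite cF cd !mulr1 !addr0.
- have cd : c != d by apply/eqP => e; move: hdt; rewrite -e ct ltnn.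
  rewrite ltnS leqNgt hdt /= in IH1; case: IH1 => -> ->.
  have m1 : (0 < mcnt Fr t.+1)%N.
    by rewrite /mcnt card_gt0; apply/set0Pn; exists d; rewrite !inE dF.
  case: (mcnt Fr t.+1) m1 => // k _.
  rewrite cd; case: (c \in Fr) => /=; rewrite ?mul1r ?addr0 ?add0n //= exprS; split; ring.
- have cd : c = d by apply/val_inj => /=; rewrite ct hdt.
  subst d; rewrite ltnS ct leqnn in IH1; case: IH1 => -> ->.
  rewrite eqxx dF.
  have -> : mcnt Fr t.+1 = 0%N.
    apply: eq_card0 => c'; rewrite !inE; apply/negP => /andP[/hFd].
    by rewrite ct => h1 h2; have := leq_trans h2 h1; rewrite ltnn.
  by rewrite /= !add0r !mulr1 addr0.
Qed.

Lemma rowok_t0 (Fr : {set 'I_n}) (d : 'I_n) (v : rowT) : rowok Fr d v = rowokt Fr d 0 v.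
Proof.
apply/and3P/rowoktP => [[/forallP h1 /forallP h2 h3]|[h1 h2 h3]]; split => //.
- by move=> c /(implyP (h1 c)) ->.
- move=> c c' hb hlt; apply/eqP; apply: (implyP (forallP (h2 c) c')).
  by rewrite hb eqxx hlt.
- by apply/forallP => c; apply/implyP => /h1 [].
- apply/forallP => c; apply/forallP => c'; apply/implyP => /andP[/eqP hb hlt].
  by rewrite (h2 c c').
- exact: h3.
Qed.

Lemma rowsum (Fr : {set 'I_n}) (d : 'I_n) x : d \in Fr -> (forall c, c \in Fr -> (c <= d)%N) ->
  \sum_(v : rowT | rowok Fr d v) rwt Fr x 0 v = (alpha + beta * x) * (alpha + x) ^+ #|Fr|.-1.
Proof.
move=> dF hFd; have := @Tt_val Fr d x dF hFd n 0 (add0n n) => -[h _].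
have -> : #|Fr| = mcnt Fr 0 by apply: eq_card => c; rewrite !inE andbT.
rewrite -h /Tt; apply: eq_bigl => v; by rewrite rowok_t0 orTb andbT.
Qed.

Definition supp k (S : fill) := forall p : box n, S p != None -> (p.1 + p.2 < n)%N /\ (k <= p.1)%N.

Lemma good_supp k S : good k S -> supp k S.
Proof. by case/goodP. Qed.

Lemma supp_le k k' S : (k' <= k)%N -> supp k S -> supp k' S.
Proof. by move=> hk h p /h [a b]; split => //; exact: leq_trans hk b. Qed.

Lemma fr_step k S : (k < n)%N -> supp k.+1 S -> #|fr k S| = (#|fr k.+1 S|).+1.
Proof.
move=> hk hS; have hd : (n - k.+1 < n)%N by lia.
pose d := Ordinal hd.
have dfr : d \in fr k S.
  rewrite inE /=; apply/andP; split; first by lia.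
  apply/forallP => i'; apply/negP => /eqP h.
  have [] := hS (i', d); first by rewrite h.
  by rewrite /= => h1 h2; lia.
rewrite (cardsD1 d) dfr add1n; congr (_.+1); apply: eq_card => c; rewrite !inE.
case: (c =P d) => [->|/eqP ne] /=; first by apply/esym/negbTE; rewrite negb_and; apply/orP; left; rewrite /=; lia.
have : (c : nat) != (n - k.+1)%N by apply: contra ne => /eqP h; apply/eqP/val_inj.
by move=> h; congr andb; apply/idP/idP; lia.
Qed.

Lemma colfree_glue (i : 'I_n) S v c : supp i.+1 S ->
  colfree (glue i S v) c = colfree S c && (v c != Some true).
Proof.
move=> hS; apply/forallP/andP => [h|[/forallP h hv] i'].
  split; last by have := h i; rewrite glue_in.
  apply/forallP => i'; case: (i' =P i) => [->|/eqP ne].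
    apply/negP => /eqP e; have [] := hS (i, c); first by rewrite e.
    by rewrite /= ltnn.
  by have := h i'; rewrite glue_out.
by case: (i' =P i) => [->|/eqP ne]; [rewrite glue_in | rewrite glue_out].
Qed.

Lemma card_glue (i : 'I_n) S v (Q : pred (option bool)) : supp i.+1 S -> ~~ Q None ->
  #|[set p | Q (glue i S v p)]| = (#|[set p | Q (S p)]| + #|[set c | Q (v c)]|)%N.
Proof.
move=> hS hQ.
have inj : injective (fun c : 'I_n => (i, c)) by move=> c1 c2 [].
have hSi c : S (i, c) = None.
  by apply/eqP; apply/negPn/negP => /hS [_]; rewrite /= ltnn.
have -> : [set p | Q (glue i S v p)] = [set p | Q (S p)] :|: ((fun c => (i, c)) @: [set c | Q (v c)]).
  apply/setP => -[a b]; rewrite !inE ffunE /=; case: (a =P i) => [->|/eqP ne].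
    by rewrite mem_imset // hSi (negbTE hQ) inE.
  suff -> : ((a, b) \in [set (i, c) | c in [set c | Q (v c)]]) = false by rewrite orbF.
  by apply/negP => /imsetP [c _ [e _]]; rewrite e eqxx in ne.
rewrite cardsU card_imset // (_ : _ :&: _ = set0) ?cards0 ?subn0 //.
apply/setP => -[a b]; rewrite !inE; apply/negP => /andP[h /imsetP [c _ [e1 e2]]].
by move: h; rewrite e1 hSi (negbTE hQ).
Qed.

Lemma wt_glue (i : 'I_n) S v : supp i.+1 S ->
  wt alpha beta (glue i S v) = wt alpha beta S * (alpha ^+ cntA v * beta ^+ cntB v).
Proof.
move=> hS; rewrite /wt /N_alpha /N_beta /cntA /cntB.
rewrite (card_glue v (Q := fun o => o == Some true)) // (card_glue v (Q := fun o => o == Some false)) //.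
by rewrite !exprD; ring.
Qed.

Lemma fr_glue (i : 'I_n) S v : supp i.+1 S ->
  #|fr i (glue i S v)| = cntX (fr i S) 0 v.
Proof.
move=> hS; apply: eq_card => c; rewrite !inE colfree_glue //.
by rewrite leq0n andbT andbA.
Qed.


Definition Gsum k (E : pred fill) (x : R) :=
  \sum_(S : fill | good k S && E S) wt alpha beta S * x ^+ #|fr k S|.

Lemma rev_fr (i : 'I_n) S : supp i.+1 S -> rev_ord i \in fr i S.
Proof.
move=> hS; rewrite inE /=; apply/andP; split; first by have := ltn_ord i; lia.
apply/forallP => i'; apply/negP => /eqP h.
have [] := hS (i', rev_ord i); first by rewrite h.
by rewrite /= => h1 h2; have := ltn_ord i; lia.
Qed.


Lemma fr_le (i : 'I_n) S c : c \in fr i S -> (c <= rev_ord i)%N.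
Proof. rewrite inE /= => /andP[h _]. have := ltn_ord i. lia. Qed.
Lemma rowsum_fr (i : 'I_n) S x : supp i.+1 S ->
  \sum_(v : rowT | rowok (fr i S) (rev_ord i) v) rwt (fr i S) x 0 v =
  (alpha + beta * x) * (alpha + x) ^+ #|fr i.+1 S|.
Proof.
move=> hS; rewrite rowsum; [|exact: rev_fr | exact: fr_le].
by rewrite (@fr_step i S).
Qed.

Lemma inner_sum (i : 'I_n) (S : fill) (P : pred rowT) (Fn : fill -> R) : good i.+1 S ->
  \sum_(v : rowT | good i (glue i S v) && P v) Fn (glue i S v) =
  \sum_(v : rowT | rowok (fr i S) (rev_ord i) v && P v) Fn (glue i S v).
Proof. by move=> gS; apply: eq_bigl => v; rewrite good_glue. Qed.


Lemma G_step (i : 'I_n) E x : (forall S v, E (glue i S v) = E S) ->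
  Gsum i E x = (alpha + beta * x) * Gsum i.+1 E (alpha + x).
Proof.
move=> hE; rewrite /Gsum big_mkcondr decomp [in RHS]big_mkcondr big_distrr /=.
apply: eq_bigr => S gS; have hS := good_supp gS.
rewrite (eq_bigr (fun v => if E S then wt alpha beta S * rwt (fr i S) x 0 v else 0)); last first.
  by move=> v _; rewrite hE wt_glue // fr_glue // -mulrA.
case: (E S); last by rewrite big1 ?mulr0.
rewrite -big_distrr /=.
rewrite (eq_bigl (fun v => rowok (fr i S) (rev_ord i) v)); last by move=> v; rewrite good_glue.
by rewrite rowsum_fr //= mulrCA.
Qed.

Definition evr (j : nat) (S : fill) :=
  [exists p : box n, [&& (p.1 == j :> nat), (p.2 == (n - j.+2)%N :> nat) & S p != None]].

Lemma evr_glue_other (i : 'I_n) j S v : (j != i :> nat) -> evr j (glue i S v) = evr j S.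
Proof.
move=> ne; apply/existsP/existsP => -[p /and3P[h1 h2 h3]]; exists p; rewrite h1 h2 /=.
  rewrite glue_out // in h3; apply: contra ne => /eqP e; by rewrite -(eqP h1) e.
rewrite glue_out //; apply: contra ne => /eqP e; by rewrite -(eqP h1) e.
Qed.

Lemma evr_glue_in (i e : 'I_n) S v : (e : nat) = (n - i.+2)%N -> evr i (glue i S v) = (v e != None).
Proof.
move=> he; apply/existsP/idP => [[[a b] /and3P[h1 h2 h3]]|h].
  have ea : a = i by apply/val_inj/eqP.
  have eb : b = e by apply/val_inj; rewrite /= (eqP h2) he.
  by move: h3; rewrite ea eb glue_in.
by exists (i, e); rewrite /= eqxx he eqxx glue_in.
Qed.

Lemma rowsum_ev (Fr : {set 'I_n}) (d e : 'I_n) x : d \in Fr -> (forall c, c \in Fr -> (c <= d)%N) -> e != d ->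
  \sum_(v : rowT | rowok Fr d v && (v e != None)) rwt Fr x 0 v =
  if e \in Fr then alpha * (alpha + beta * x) * (alpha + x) ^+ (#|Fr|.-2) else 0.
Proof.
move=> dF hFd ne; case eF: (e \in Fr); last first.
  rewrite big_pred0 // => v; apply/negP => /andP[/and3P[/forallP h _ _] hv].
  by have := implyP (h e) hv; rewrite eF.
have dF' : d \in Fr :\ e by rewrite !inE eq_sym ne.
have hFd' c : c \in Fr :\ e -> (c <= d)%N by rewrite !inE => /andP[_ /hFd].
have h := rowsum x dF hFd; rewrite (bigID (fun v : rowT => v e != None)) /= in h.
have h2 : \sum_(v : rowT | rowok Fr d v && ~~ (v e != None)) rwt Fr x 0 v =
    x * ((alpha + beta * x) * (alpha + x) ^+ #|Fr :\ e|.-1).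
  rewrite -(rowsum x dF' hFd') big_distrr /=; apply: eq_big => v.
    rewrite !rowok_t0 negbK; apply/andP/rowoktP => [[/rowoktP[h1 h2 h3] /eqP ve]|[h1 h2 h3]].
      split => // c hc; have [cF _] := h1 c hc; split => //; rewrite !inE cF andbT.
      by apply: contraNneq hc => ->; rewrite ve.
    split; last first.
      by apply/negPn/negP => /h1 []; rewrite !inE eqxx.
    apply/rowoktP; split => // c hc; have [] := h1 c hc; rewrite !inE => /andP[_ ->]; by [].
  move=> /andP[_]; rewrite negbK => /eqP ve.
  rewrite /rwt /cntX (cardsD1 e) !inE eF ve /= exprS mulrCA; congr (_ * (_ * _ ^+ _)).
  by apply: eq_card => c; rewrite !inE; case: (c =P e) => [->|]; rewrite ?ve.
rewrite h2 in h; move: h.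
rewrite [#|Fr|](cardsD1 e) eF add1n /=.
have : (0 < #|Fr :\ e|)%N by apply/card_gt0P; exists d.
case: #|Fr :\ e| => // k _ /= h.
rewrite -[LHS](addrK (x * ((alpha + beta * x) * (alpha + x) ^+ k))) h exprS; ring.
Qed.

Lemma G_ev (i : 'I_n) (hi : (i.+1 < n)%N) E x :
  (forall S v, E (glue i S v) = E S) -> (forall S v, E (glue (Ordinal hi) S v) = E S) ->
  Gsum i (fun S => evr i S && E S) x = alpha * beta * (alpha + beta * x) * Gsum i.+2 E (alpha + x).
Proof.
move=> hE hE1.
pose i1 := Ordinal hi; pose e := rev_ord i1.
have he : (e : nat) = (n - i.+2)%N by [].
have ne : e != rev_ord i by apply/eqP => /(congr1 val) /=; lia.
rewrite /Gsum big_mkcondr decomp [in RHS]big_mkcondr big_distrr /=.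
rewrite (eq_bigr (fun S => if E S then wt alpha beta S *
   (if e \in fr i S then alpha * (alpha + beta * x) * (alpha + x) ^+ #|fr i S|.-2 else 0) else 0)); last first.
  move=> S gS; have hS := good_supp gS.
  rewrite (eq_bigr (fun v : rowT => if E S then (if v e != None then wt alpha beta S * rwt (fr i S) x 0 v else 0) else 0)); last first.
    move=> v _; rewrite hE (evr_glue_in _ _ he) wt_glue // fr_glue // -mulrA.
    by case: (E S); case: (v e != None).
  case: (E S); last by rewrite big1.
  rewrite -big_mkcondr -big_distrr /=.
  rewrite (eq_bigl (fun v : rowT => rowok (fr i S) (rev_ord i) v && (v e != None))); last by move=> v; rewrite good_glue.
  by rewrite rowsum_ev //; [exact: rev_fr | exact: fr_le].
rewrite (decomp i1) /=; apply: eq_bigr => S gS; have hS := good_supp gS.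
have hS1 : supp i1.+1 S by [].
pose dl : rowT := [ffun c => if c == e then Some false else None].
rewrite (eq_bigl (fun v => rowok (fr i1 S) e v)); last by move=> v; apply: good_glue.
rewrite (bigID (fun v : rowT => v e == Some false)) /=.
rewrite [X in _ + X]big1 ?addr0; last first.
  move=> v /andP[/and3P[_ _ hd] hb]; rewrite hE1; case: (E S) => //.
  suff -> : (e \in fr i (glue i1 S v)) = false by rewrite mulr0.
  rewrite inE colfree_glue //; apply/negbTE; rewrite !negb_and; apply/orP; right; apply/orP; right.
  by move: hd hb; case: (v e) => [[]|].
rewrite (big_pred1 dl); last first.
  move=> v; apply/idP/eqP => [/andP[/and3P[/forallP h1 /forallP h2 _] /eqP hb]|->].
    apply/ffunP => c; rewrite ffunE; case: (c =P e) => [->//|/eqP cne].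
    case: (ltngtP c e) => hce.
    - by apply/eqP; apply: (implyP (forallP (h2 c) e)); rewrite hb eqxx hce.
    - apply/eqP; apply/negPn/negP => /(implyP (h1 c)) hc.
      by have := @fr_le i1 S c hc; rewrite leqNgt hce.
    - by move: cne; rewrite (_ : c = e) ?eqxx //; apply/val_inj.
  have efr1 : e \in fr i.+1 S by exact: (rev_fr hS1).
  rewrite ffunE eqxx eqxx andbT; apply/and3P; split.
  - by apply/forallP => c; rewrite ffunE; case: (c =P e) => [->|//].
  - apply/forallP => c; apply/forallP => c'; rewrite !ffunE; apply/implyP => /andP[hb hlt].
    have ce' : c' = e by move: hb; case: (c' =P e).
    have : c != e by apply/eqP => ce; move: hlt; rewrite ce ce' ltnn.
    by move/negbTE ->.
  - by rewrite ffunE eqxx.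
rewrite hE1; case: (E S); last by rewrite mulr0.
have efr : e \in fr i (glue i1 S dl).
  rewrite inE colfree_glue // ffunE eqxx andbT; apply/andP; split; first by rewrite he; lia.
  apply/forallP => i'; apply/negP => /eqP h; have [] := hS (i', e); first by rewrite h.
  by move=> h1 h2; have := he; simpl in *; lia.
have hfr : #|fr i (glue i1 S dl)| = #|fr i S|.
  apply: eq_card => c; rewrite !inE colfree_glue // ffunE.
  by case: (c =P e); rewrite ?andbT.
rewrite efr wt_glue // hfr (@fr_step i S) ?(@fr_step i.+1 S) //=; first last.
  exact: supp_le hS.
have -> : cntA dl = 0%N by apply: eq_card0 => c; rewrite !inE ffunE; case: (c =P e).
have -> : cntB dl = 1%N.
  rewrite -(cards1 e); apply: eq_card => c; rewrite !inE ffunE; by case: (c =P e).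
rewrite expr0 expr1 mul1r; ring.
Qed.

Lemma Gsum_ext k E E' x : E =1 E' -> Gsum k E x = Gsum k E' x.
Proof. by move=> h; apply: eq_bigl => S; rewrite h. Qed.

Lemma Gsum_n x : Gsum n (fun S => true) x = 1.
Proof.
rewrite /Gsum (big_pred1 [ffun => None]); last first.
  move=> S; rewrite andbT; apply/idP/eqP => [/goodP[h1 _ _ _]|->].
    apply/ffunP => p; rewrite ffunE; apply/eqP; apply/negPn/negP => /h1 [_].
    by rewrite leqNgt ltn_ord.
  apply/goodP; split => [p|p q|p q|p]; rewrite ?ffunE //.
  by move=> _; rewrite leqNgt ltn_ord.
rewrite /wt /N_alpha /N_beta !eq_card0 ?expr0 ?mulr1 // => p; rewrite !inE ?ffunE //.
by rewrite ltnNge leq_addr.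
Qed.

Lemma size_bound (m : nat) (s : seq nat) : uniq s ->
  (forall j, j \in s -> (m <= j)%N && (j.+2 <= n)%N) -> (size s <= n - m - 1)%N.
Proof.
move=> us hs; rewrite -(size_iota m (n - m - 1)); apply: uniq_leq_size => // j /hs /andP[h1 h2].
by rewrite mem_iota; apply/andP; split => //; lia.
Qed.

Lemma prod_shift (M : nat) x :
  \prod_(j < M.+1) (alpha + j%:R * alpha * beta + beta * x) =
  (alpha + beta * x) * \prod_(j < M) (alpha + j%:R * alpha * beta + beta * (alpha + x)).
Proof.
rewrite big_ord_recl /= !mul0r addr0; congr (_ * _); apply: eq_bigr => j _.
by rewrite /bump /= add1n -addn1 natrD; ring.
Qed.

Lemma mainG (N : nat) : forall k (rs : seq nat) x, (n - k <= N)%N -> (k <= n)%N -> uniq rs ->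
  (forall j, j \in rs -> [&& (k <= j)%N, (j.+2 <= n)%N & j.+1 \notin rs]) ->
  Gsum k (fun S : filling n => all (evr^~ S) rs) x =
  (alpha * beta) ^+ size rs * \prod_(j < n - k - size rs) (alpha + j%:R * alpha * beta + beta * x).
Proof.
elim: N => [|N IH] k rs x hN hk urs hrs.
- have -> : k = n by lia.
  have -> : rs = [::].
    case: rs hrs {urs} => // j rs' /(_ j); rewrite inE eqxx => /(_ isT) /and3P[h1 h2 _]; lia.
  by rewrite Gsum_n /= subn0 subnn big_ord0 expr0 mulr1.
have [ekn|hkn] : k = n \/ (k < n)%N by lia.
  subst k; have -> : rs = [::].
    case: rs hrs {urs} => // j rs' /(_ j); rewrite inE eqxx => /(_ isT) /and3P[h1 h2 _]; lia.
  by rewrite Gsum_n /= subn0 subnn big_ord0 expr0 mulr1.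
pose i := Ordinal hkn.
case krs: (k \in rs).
- have [_ hk2 hk1] := and3P (hrs k krs).
  have hi : (i.+1 < n)%N by [].
  pose rs' := rem k rs.
  have hrs' j : j \in rs' -> [&& (k.+2 <= j)%N, (j.+2 <= n)%N & j.+1 \notin rs'].
    rewrite (mem_rem_uniq _ urs) inE => /andP[jk jrs]; have /and3P[h1 h2 h3] := hrs j jrs.
    have jk1 : j != k.+1 by apply: contraNneq hk1 => <-.
    rewrite h2 /=; apply/andP; split; last by apply: contra h3 => /mem_rem.
    by move: jk jk1 => /eqP jk /eqP jk1; lia.
  rewrite (@Gsum_ext _ _ (fun S => evr i S && all (evr^~ S) rs')); last first.
    by move=> S; rewrite (perm_all _ (perm_to_rem krs)).
  rewrite (@G_ev i hi); first last.
  + move=> S v; apply: eq_in_all => j /hrs' /and3P[h1 _ _]; apply: evr_glue_other => /=; lia.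
  + move=> S v; apply: eq_in_all => j /hrs' /and3P[h1 _ _]; apply: evr_glue_other => /=; lia.
  rewrite (IH k.+2 rs'); first last.
  + by move=> j /hrs' /and3P[-> -> ->].
  + exact: rem_uniq.
  + exact: hk2.
  + lia.
  have hsz : size rs = (size rs').+1 by rewrite size_rem // prednK //; case: (rs) krs.
  have hb : (size rs' <= n - k.+2 - 1)%N.
    by apply: size_bound; [exact: rem_uniq | move=> j /hrs' /and3P[-> -> _]].
  rewrite hsz (_ : (n - k - (size rs').+1 = (n - k.+2 - size rs').+1)%N); last by lia.
  by rewrite prod_shift exprS; ring.
- have hrs1 j : j \in rs -> [&& (k.+1 <= j)%N, (j.+2 <= n)%N & j.+1 \notin rs].
    move=> jrs; have /and3P[h1 h2 h3] := hrs j jrs; rewrite h2 h3 !andbT.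
    have /eqP kj : k != j by apply/eqP => e; move: krs; rewrite e jrs.
    lia.
  rewrite (@G_step i); last first.
    move=> S v; apply: eq_in_all => j /hrs1 /and3P[h1 _ _]; apply: evr_glue_other => /=; lia.
  rewrite (IH k.+1 rs) //; last by lia.
  have hb : (size rs <= n - k.+1 - 1)%N.
    by apply: size_bound => // j /hrs1 /and3P[-> -> _].
  rewrite (_ : (n - k - size rs = (n - k.+1 - size rs).+1)%N); last by lia.
  by rewrite prod_shift; ring.
Qed.

Lemma alg (r : nat) : (r <= n)%N -> 0 < alpha -> 0 < beta ->
  (alpha * beta) ^+ r * \prod_(j < n - r) (alpha + j%:R * alpha * beta + beta * 1) /
    \prod_(j < n) (alpha + j%:R * alpha * beta + beta * 1) =
  \prod_(1 <= k < r.+1) (n%:R + alpha^-1 + beta^-1 - r%:R + k%:R - 1)^-1.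
Proof.
move=> hr ha hb.
pose f (j : nat) := alpha + j%:R * alpha * beta + beta * 1.
have fpos j : 0 < f j.
  rewrite /f mulr1 -mulrA; have := ler0n R j; have := mulr_gt0 ha hb; nra.
rewrite -!(big_mkord xpredT f) (big_cat_nat (n := n - r) (m := 0) (p := n)) ?leq_subr //=.
set P := \prod_(0 <= j < n - r) f j.
have P0 : P != 0 by rewrite /P prodf_seq_neq0; apply/allP => j _; rewrite gt_eqF.
rewrite invfM mulrA -(mulrA _ P) divff // mulr1.
rewrite -{1}(add0n (n - r)%N) big_addn subKn // big_add1 /=.
rewrite (_ : (alpha * beta) ^+ r = \prod_(0 <= i < r) (alpha * beta)); last by rewrite prodr_const_nat subn0.
rewrite -prodfV -big_split /=.
apply: eq_big_nat => i /andP[_ hi].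
set m := (i + (n - r))%N.
have e : (m%:R : R) = n%:R - r%:R + i.+1%:R - 1.
  have h : (m + r + 1 = n + i.+1)%N by rewrite /m; lia.
  have hR := congr1 (fun q => q%:R : R) h; move: hR; rewrite /= !natrD; lra.
rewrite /f e; set M := n%:R - r%:R + i.+1%:R - 1.
have M0 : 0 <= M by rewrite /M -e ler0n.
have an : alpha != 0 by rewrite gt_eqF.
have bn : beta != 0 by rewrite gt_eqF.
rewrite (_ : n%:R + alpha^-1 + beta^-1 - r%:R + i.+1%:R - 1 = (alpha + M * alpha * beta + beta * 1) / (alpha * beta)).
  by rewrite invf_div.
rewrite /M; field.
by rewrite an bn.
Qed.

Lemma stairs_good (S : fill) : (S \in stairs n) = good 0 S.
Proof.
rewrite inE /is_ab_stair /good; congr [&& _, _, _ & _].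
  apply: eq_forallb => p; rewrite /in_stair leq0n andbT.
  by case: (p.1 + p.2 < n)%N; case: (S p == None).
by apply: eq_forallb => p; rewrite andbT.
Qed.

Lemma sum_stairs (E : pred fill) :
  \sum_(S in stairs n | E S) wt alpha beta S = Gsum 0 E 1.
Proof.
rewrite /Gsum; apply: eq_big => [S|S _]; first by rewrite stairs_good.
by rewrite expr1n mulr1.
Qed.

Lemma xev_evr (S : fill) j : (1 <= j)%N -> (j <= n - 1)%N -> x_ev j S = evr (n - j - 1) S.
Proof.
move=> h1 h2; rewrite /x_ev /evr.
by rewrite (_ : (n - (n - j - 1).+2)%N = (j - 1)%N) //; lia.
Qed.

Lemma no_adj (S : fill) j : (1 <= j)%N -> (j.+2 <= n)%N -> good 0 S -> x_ev j S -> x_ev j.+1 S -> False.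
Proof.
move=> h1 h2 /goodP[_ g2 g3 g4] /existsP[p /and3P[/eqP p1 /eqP p2 hp]] /existsP[q /and3P[/eqP q1 /eqP q2 hq]].
pose r : box n := (p.1, q.2).
have := g4 r; rewrite /= leq0n => /(_ _ isT); case e: (S r) => [[]|]; last first.
- move=> h; suff: (p.1 + q.2)%N = n.-1 by move/h; rewrite eqxx.
  by rewrite p1 q2; lia.
- move=> _; have hn := g3 (p.1, q.2) p e erefl; move: hp; rewrite /= hn //=.
  by rewrite q2 p2; lia.
- move=> _; have hn := g2 (p.1, q.2) q e erefl; move: hq; rewrite /= hn //=.
  by rewrite q1 p1; lia.
Qed.

End Main.

Lemma sep_ok (js : seq nat) : all (fun j => 1 <= j)%N js -> sorted (fun x y => x <= y - 2)%N js ->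
  forall j, j \in js -> j.+1 \notin js.
Proof.
have tr : transitive (fun x y => x <= y - 2)%N by move=> y x z; lia.
elim: js => // a t IH /= /andP[ha ht] hs j.
have hst := path_sorted hs.
have /allP hall := order_path_min tr hs.
rewrite !inE => /orP[/eqP ->|jt].
  rewrite negb_or; apply/andP; split; first by rewrite eq_sym neq_ltn ltnSn.
  by apply/negP => /hall; lia.
rewrite negb_or (IH ht hst j jt) andbT.
by apply/eqP => e; have := hall j jt; lia.
Qed.

Lemma adj_exists (js : seq nat) : sorted ltn js -> ~~ sorted (fun x y => x <= y - 2)%N js ->
  exists j, (j \in js) && (j.+1 \in js).
Proof.
elim: js => // a [|b t] IH //= /andP[hab hp] hns.
case: (leqP a (b - 2)) => h.
  move: hns; rewrite h /= => hns.
  have [j /andP[j1 j2]] := IH hp hns.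
  by exists j; rewrite inE j1 orbT inE j2 orbT.
exists a; rewrite inE eqxx /= !inE (_ : a.+1 = b) ?eqxx ?orbT //; lia.
Qed.


Theorem theorem3p8 (R : realFieldType) (n : nat) (alpha beta : R)
  (js : seq nat) :
  (2 <= n)%N -> 0 < alpha -> 0 < beta ->
  (0 < size js)%N ->
  sorted ltn js -> all (fun j => (1 <= j <= n - 1)%N) js ->
  let a := alpha^-1 in let b := beta^-1 in let r := size js in
  (sorted (fun x y => x <= y - 2)%N js ->
     @prob R n alpha beta (@x_evs n js) =
     \prod_(1 <= k < r.+1) (n%:R + a + b - r%:R + k%:R - 1)^-1)
  /\
  (~~ sorted (fun x y => x <= y - 2)%N js ->
     @prob R n alpha beta (@x_evs n js) = 0).
Proof.
move=> hn ha hb _ hs hall a b r.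
have hall' j : j \in js -> (1 <= j <= n - 1)%N by move: j; apply/allP.
split => [hsep|hnsep]; last first.
  have [j /andP[j1 j2]] := adj_exists hs hnsep.
  rewrite /prob big_pred0 ?mul0r // => S; apply/negP => /andP[hS hx].
  rewrite stairs_good in hS; move/allP: hx => hx.
  have /andP[h1 _] := hall' j j1; have /andP[_ h2] := hall' _ j2.
  apply: (no_adj h1 _ hS (hx j j1) (hx _ j2)); lia.
pose f j := (n - j - 1)%N; pose rs := map f js.
have ujs : uniq js := sorted_uniq ltn_trans ltnn hs.
have a1 : all (fun j => 1 <= j)%N js by apply/allP => j /hall' /andP[].
have urs : uniq rs.
  rewrite map_inj_in_uniq // => j1 j2 /hall' /andP[h1 h2] /hall' /andP[h3 h4].
  by rewrite /f; lia.
have hrs j : j \in rs -> [&& (0 <= j)%N, (j.+2 <= n)%N & j.+1 \notin rs].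
  move/mapP => [j0 j0js ->]; have /andP[h1 h2] := hall' j0 j0js.
  rewrite leq0n /=; apply/andP; split; first by rewrite /f; lia.
  apply/mapP => -[j1 j1js e]; have /andP[h3 h4] := hall' j1 j1js.
  have ej : j1.+1 = j0 by move: e; rewrite /f; lia.
  by have := sep_ok a1 hsep j1js; rewrite ej j0js.
have den : \sum_(S in stairs n) wt alpha beta S = Gsum alpha beta 0 (fun S : filling n => all (fun j => evr j S) [::]) 1.
  by rewrite -sum_stairs; apply: eq_bigl => S; rewrite andbT.
rewrite /prob den sum_stairs (@Gsum_ext R alpha beta n 0 _ (fun S : filling n => all (fun j => evr j S) rs)); last first.
  move=> S; rewrite /x_evs /rs all_map; apply: eq_in_all => j /hall' /andP[h1 h2].
  exact: xev_evr.
rewrite (@mainG R alpha beta n n 0 rs) ?subn0 //.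
rewrite (@mainG R alpha beta n n 0 [::]) ?subn0 //= expr0 mul1r.
have hsz : (size rs <= n - 0 - 1)%N.
  by apply: size_bound => // j /hrs /and3P[_ -> _].
rewrite /rs size_map in hsz *; apply: alg => //; lia.
Qed.
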